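(* Let $n\geq 1$, let $\pi\in S_n$ be a 321-avoiding permutation and let $A_\pi$ be the associated linear Nakayama algebra (with $n+1$ simple modules) with Jacobson radical $J$. Then $\operatorname{Ext}^1_{A_\pi}(J,J)\cong K^{\mathfrak{s}(\pi)}$ as $K$-vector spaces.
   Context: $K$ is a field. A linear Nakayama algebra with $m$ simple modules is a connected algebra $A=KQ/I$ with $Q$ the quiver $0\to1\to\cdots\to m-1$ and $I$ admissible; modules are finite-dimensional right modules, $J$ is the Jacobson radical of $A$ viewed as right module. The indecomposable projective $e_iA$ is uniserial with composition factors $S_i,\dots,S_{i+c_i-1}$, $c_i=\dim_K e_iA$, and $A$ is determined by $[c_0,\dots,c_{m-1}]$. For $m=n+1$, the Dyck path $\mathcal D_A$ of $A$ is the lattice path from $(0,0)$ to $(2n,0)$ whose vertex with first coordinate $x$ has height $h(x)=\max\{k-1: 0\le i\le n,\ 1\le k\le c_i,\ 2i+k-1=2n-x\}$; this is a bijection between isomorphism classes of such algebras and Dyck paths of semilength $n$. Billey–Jockusch–Stanley bijection: for a Dyck path $u^{a_1}d^{d_1}\cdots u^{a_\ell}d^{d_\ell}$ ($a_i,d_i\ge1$) put $A_j=a_1+\dots+a_j$, $D_j=d_1+\dots+d_j$ ($1\le j\le\ell-1$), set $\pi(D_j)=A_j+1$ and fill the remaining positions in increasing order with the remaining values of $[n]$; this is a bijection onto 321-avoiding permutations of $[n]$. $A_\pi$ is the linear Nakayama algebra whose Dyck path corresponds to $\pi$. Support size: $\mathfrak s(\pi)$ is the number of distinct simple transpositions $s_i=(i,i+1)$,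 $1\le i\le n-1$, occurring in a reduced (minimal length) expression of $\pi$ as a product of the $s_i$. *)

(* Defs.v *)
From HB Require Import structures.
From mathcomp Require Import all_boot all_order all_algebra all_fingroup.

Set Implicit Arguments.
Unset Strict Implicit.
Unset Printing Implicit Defensive.

Import GRing.Theory.

(* A linear Nakayama algebra with m = size c simple modules is given by its *)
(* Kupisch series c = [c_0; ...; c_{m-1}], c_i = dim e_i A.  For m = n+1,   *)
(* the conditions below characterise the sequences that arise from a        *)
(* connected algebra K Q / I, Q = 0 -> 1 -> ... -> n, I admissible:         *)
(*   c_n = 1 (the sink), c_i >= 2 for i < n (arrows are not in I),          *)
(*   c_{i+1} >= c_i - 1 (e_{i+1}A is a quotient-free continuation).          *)
Definition linNakayama (n : nat) (c : seq nat) : Prop :=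
  [/\ size c = n.+1, nth 0 c n = 1,
      (forall i, i < n -> 2 <= nth 0 c i)
    & (forall i, i < n -> (nth 0 c i).-1 <= nth 0 c i.+1)].

(* A (finite-dimensional right) module M is given by d j = dim M e_j and    *)
(* the action of the arrow j -> j+1 as a matrix f j : M e_j -> M e_{j+1}    *)
(* acting on row vectors (right action).  d j = 0 for j outside the quiver. *)
(* The ideal I is generated by the paths of length c_i starting at i, so M  *)
(* is an A-module iff those paths act as zero.                              *)
Definition pathmx (K : fieldType) (d : nat -> nat)
  (f : forall j, 'M[K]_(d j, d j.+1)) (i : nat) :
  forall k : nat, 'M[K]_(d i, d (k + i)) :=
  fix p (k : nat) : 'M[K]_(d i, d (k + i)) :=
    match k return 'M[K]_(d i, d (k + i)) with
    | 0 => ((1%:M)%R : 'M[K]_(d i))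
    | k'.+1 => (p k' *m f (k' + i))%R
    end.

Definition isModule (K : fieldType) (c : seq nat) (d : nat -> nat)
  (f : forall j, 'M[K]_(d j, d j.+1)) : Prop :=
  (forall j, size c <= j -> d j = 0) /\
  (forall i, i < size c -> pathmx f i (nth 0 c i) = 0%R).

(* The Jacobson radical J of A_A = (+)_i e_i A.  The vertex-j part J e_j    *)
(* has as basis the (nonzero) paths i -> j of positive length, indexed by  *)
(* their start i, i.e. the i with i < j < i + c_i; the arrow j -> j+1 maps *)
(* the path from i to the path from i (or to 0 if that path is in I).       *)
Definition radS (c : seq nat) (j : nat) : seq nat :=
  [seq i <- iota 0 (size c) | (i < j) && (j < i + nth 0 c i)].

Definition dimJ (c : seq nat) (j : nat) : nat := size (radS c j).

Definition actJ (K : fieldType) (c : seq nat) (j : nat) :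
  'M[K]_(dimJ c j, dimJ c j.+1) :=
  \matrix_(a < dimJ c j, b < dimJ c j.+1)
    (if nth 0 (radS c j) a == nth 0 (radS c j.+1) b then 1%R else 0%R).

(* An extension 0 -> N -> E -> M -> 0 is, up to equivalence, E e_j =        *)
(* N e_j (+) M e_j with arrow action [[fN j, 0], [g j, fM j]]; it is an     *)
(* A-module iff g is a "cocycle".  Equivalent extensions differ by a        *)
(* coboundary  g j = h j * fN j - fM j * h (j+1),  and Baer sum / scalar   *)
(* multiplication correspond to + and *: on g.  So Ext^1 = Z / B.           *)
Definition extDims (dM dN : nat -> nat) (j : nat) : nat := dN j + dM j.

Definition extAct (K : fieldType) (dM dN : nat -> nat)
  (fM : forall j, 'M[K]_(dM j, dM j.+1)) (fN : forall j, 'M[K]_(dN j, dN j.+1))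
  (g : forall j, 'M[K]_(dM j, dN j.+1)) (j : nat) :
  'M[K]_(extDims dM dN j, extDims dM dN j.+1) :=
  block_mx (fN j) 0%R (g j) (fM j).

Definition isCocycle (K : fieldType) (c : seq nat) (dM dN : nat -> nat)
  (fM : forall j, 'M[K]_(dM j, dM j.+1)) (fN : forall j, 'M[K]_(dN j, dN j.+1))
  (g : forall j, 'M[K]_(dM j, dN j.+1)) : Prop :=
  isModule c (extAct fM fN g).

Definition coboundary (K : fieldType) (dM dN : nat -> nat)
  (fM : forall j, 'M[K]_(dM j, dM j.+1)) (fN : forall j, 'M[K]_(dN j, dN j.+1))
  (h : forall j, 'M[K]_(dM j, dN j)) (j : nat) : 'M[K]_(dM j, dN j.+1) :=
  (h j *m fN j - fM j *m h j.+1)%R.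

Definition Ext1_iso_Kpow (K : fieldType) (c : seq nat) (dM dN : nat -> nat)
  (fM : forall j, 'M[K]_(dM j, dM j.+1)) (fN : forall j, 'M[K]_(dN j, dN j.+1))
  (s : nat) : Prop :=
  exists z : 'I_s -> forall j, 'M[K]_(dM j, dN j.+1),
    [/\ (forall k, isCocycle c fM fN (z k)),
        (forall g, isCocycle c fM fN g ->
           exists (a : 'I_s -> K) (h : forall j, 'M[K]_(dM j, dN j)),
             forall j, g j = (\sum_(k < s) a k *: z k j + coboundary fM fN h j)%R)
      & (forall (a : 'I_s -> K) (h : forall j, 'M[K]_(dM j, dN j)),
           (forall j, (\sum_(k < s) a k *: z k j)%R = coboundary fM fN h j) ->
           forall k, a k = 0%R)].

(* Dyck path of A (m = n+1): height of the vertex with first coordinate x: *)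
(* h(x) = max { k-1 : 0 <= i <= n, 1 <= k <= c_i, 2i + k - 1 = 2n - x }.    *)
(* (Written with k' = k - 1; the set is nonempty for 0 <= x <= 2n.)         *)
Definition dyck_height (n : nat) (c : seq nat) (x : nat) : nat :=
  \max_(i < n.+1) \max_(k < nth 0 c i)
     (if 2 * i + k == 2 * n - x then nat_of_ord k else 0).

(* At a valley x, the number of up steps before it is (x + h x)/2 and the  *)
(* number of down steps is (x - h x)/2.  These are exactly the pairs       *)
(* (D_j, A_j), 1 <= j <= l-1, of the decomposition u^a1 d^d1 ... u^al d^dl. *)
Definition valley (h : nat -> nat) (n x : nat) : Prop :=
  [/\ 0 < x < 2 * n, h x.-1 = (h x).+1 & h x.+1 = (h x).+1].

(* Billey-Jockusch-Stanley: pi(D_j) = A_j + 1 and the remaining positions  *)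
(* are filled increasingly by the remaining values (0-indexed here:        *)
(* position p : 'I_n stands for p+1 in [n]).                                *)
Definition valleyPos (h : nat -> nat) (n : nat) (p : nat) : Prop :=
  exists x, valley h n x /\ p.+1 = (x - h x)./2.

Definition BJS (n : nat) (h : nat -> nat) (pi : 'S_n) : Prop :=
  (forall x, valley h n x ->
     forall p : 'I_n, p.+1 = (x - h x)./2 -> (pi p).+1 = ((x + h x)./2).+1) /\
  (forall p q : 'I_n, p < q -> ~ valleyPos h n p -> ~ valleyPos h n q ->
     pi p < pi q).

Definition avoids321 (n : nat) (pi : 'S_n) : Prop :=
  forall i j k : 'I_n, i < j -> j < k -> ~ ((pi k < pi j) && (pi j < pi i)).

(* Words in the simple transpositions: a letter (a, b) with b = a + 1       *)
(* denotes s_{a+1} = (a+1, a+2) in 1-indexed notation.                      *)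
Definition adj_word (n : nat) (w : seq ('I_n * 'I_n)) : bool :=
  all (fun ab => val ab.2 == (val ab.1).+1) w.

Definition word_prod (n : nat) (w : seq ('I_n * 'I_n)) : 'S_n :=
  (\prod_(ab <- w) tperm ab.1 ab.2)%g.

Definition reduced_word (n : nat) (pi : 'S_n) (w : seq ('I_n * 'I_n)) : Prop :=
  [/\ adj_word w, word_prod w = pi &
      forall w', adj_word w' -> word_prod w' = pi -> size w <= size w'].

(* support size s(pi) computed from a reduced word w: number of distinct   *)
(* simple transpositions occurring in w.                                    *)
Definition support_size_of (n : nat) (w : seq ('I_n * 'I_n)) : nat :=
  size (undup w).

(* Main.v *)
Require Import Defs.
From HB Require Import structures.
From mathcomp Require Import all_boot all_order all_algebra all_fingroup.
From mathcomp Require Import zify ring.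
From Stdlib Require Import Classical.
Set Implicit Arguments.
Unset Strict Implicit.
Unset Printing Implicit Defensive.
Import GRing.Theory.
Section Ent.
Variable K : fieldType.
Variable c : seq nat.

Definition inR (j a : nat) : bool := (a < j) && (j < a + nth 0 c a).

Lemma mem_radS j a : (a \in radS c j) = inR j a.
Proof.
rewrite /radS mem_filter mem_iota add0n leq0n /= /inR.
case: (ltnP a (size c)) => H; first by rewrite andbT.
rewrite andbF nth_default // addn0; apply/esym/negbTE; apply/negP => /andP [H1 H2].
by move: (ltn_trans H1 H2); rewrite ltnn.
Qed.

Lemma radS_uniq j : uniq (radS c j).
Proof. by rewrite filter_uniq // iota_uniq. Qed.

Definition ent (j1 j2 : nat) (M : 'M[K]_(dimJ c j1, dimJ c j2)) (a b : nat) : K :=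
  match (insub (index a (radS c j1)) : option 'I_(dimJ c j1)),
        (insub (index b (radS c j2)) : option 'I_(dimJ c j2)) with
  | Some r, Some s => M r s
  | _, _ => 0%R
  end.

Lemma entE j1 j2 (M : 'M[K]_(dimJ c j1, dimJ c j2)) (r : 'I_(dimJ c j1)) (s : 'I_(dimJ c j2)) :
  ent M (nth 0 (radS c j1) r) (nth 0 (radS c j2) s) = M r s.
Proof.
rewrite /ent !index_uniq ?radS_uniq //.
rewrite !insubT //= => H1 H2; congr (M _ _); exact: val_inj.
Qed.

Lemma ent_outl j1 j2 (M : 'M[K]_(dimJ c j1, dimJ c j2)) a b :
  ~~ inR j1 a -> ent M a b = 0%R.
Proof.
rewrite -mem_radS => H; rewrite /ent insubN //.
by rewrite -leqNgt /dimJ memNindex.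
Qed.

Lemma ent_outr j1 j2 (M : 'M[K]_(dimJ c j1, dimJ c j2)) a b :
  ~~ inR j2 b -> ent M a b = 0%R.
Proof.
rewrite -mem_radS => H; rewrite /ent.
case: (insub _) => [r|] //; rewrite insubN //.
by rewrite -leqNgt /dimJ memNindex.
Qed.

Lemma ent_nth j a : inR j a -> exists r : 'I_(dimJ c j), a = nth 0 (radS c j) r.
Proof.
rewrite -mem_radS => H.
have Hr : index a (radS c j) < dimJ c j by rewrite /dimJ index_mem.
by exists (Ordinal Hr); rewrite /= nth_index.
Qed.

Lemma ent_gen j1 j2 (M N : 'M[K]_(dimJ c j1, dimJ c j2)) a b (P : K -> K -> Prop) :
  P 0%R 0%R ->
  (forall r s, P (M r s) (N r s)) -> P (ent M a b) (ent N a b).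
Proof.
move=> P0 Prs.
case: (boolP (inR j1 a)) => Ha; last by rewrite !ent_outl.
case: (boolP (inR j2 b)) => Hb; last by rewrite !ent_outr.
case: (ent_nth Ha) => r ->; case: (ent_nth Hb) => s ->.
by rewrite !entE.
Qed.

Lemma mx_ext j1 j2 (M N : 'M[K]_(dimJ c j1, dimJ c j2)) :
  (forall a b, ent M a b = ent N a b) -> M = N.
Proof. by move=> H; apply/matrixP => r s; rewrite -!entE H. Qed.

Lemma ent0 j1 j2 a b : ent (0 : 'M[K]_(dimJ c j1, dimJ c j2)) a b = 0%R.
Proof.
apply: (@ent_gen _ _ 0 0 a b (fun x y => x = 0%R)) => // r s; by rewrite mxE.
Qed.

Lemma entD j1 j2 (M N : 'M[K]_(dimJ c j1, dimJ c j2)) a b :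
  (ent (M + N) a b = ent M a b + ent N a b)%R.
Proof.
case: (boolP (inR j1 a)) => Ha; last by rewrite !ent_outl // addr0.
case: (boolP (inR j2 b)) => Hb; last by rewrite !ent_outr // addr0.
case: (ent_nth Ha) => r ->; case: (ent_nth Hb) => s ->.
by rewrite !entE mxE.
Qed.

Lemma entN j1 j2 (M : 'M[K]_(dimJ c j1, dimJ c j2)) a b :
  (ent (- M) a b = - ent M a b)%R.
Proof.
case: (boolP (inR j1 a)) => Ha; last by rewrite !ent_outl // oppr0.
case: (boolP (inR j2 b)) => Hb; last by rewrite !ent_outr // oppr0.
case: (ent_nth Ha) => r ->; case: (ent_nth Hb) => s ->.
by rewrite !entE mxE.
Qed.

Lemma entB j1 j2 (M N : 'M[K]_(dimJ c j1, dimJ c j2)) a b :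
  (ent (M - N) a b = ent M a b - ent N a b)%R.
Proof. by rewrite entD entN. Qed.

Lemma entZ j1 j2 (x : K) (M : 'M[K]_(dimJ c j1, dimJ c j2)) a b :
  (ent (x *: M) a b = x * ent M a b)%R.
Proof.
case: (boolP (inR j1 a)) => Ha; last by rewrite !ent_outl // mulr0.
case: (boolP (inR j2 b)) => Hb; last by rewrite !ent_outr // mulr0.
case: (ent_nth Ha) => r ->; case: (ent_nth Hb) => s ->.
by rewrite !entE mxE.
Qed.

Lemma ent_sum j1 j2 m (F : 'I_m -> 'M[K]_(dimJ c j1, dimJ c j2)) a b :
  (ent (\sum_(k < m) F k) a b = \sum_(k < m) ent (F k) a b)%R.
Proof.
apply/esym; elim/big_rec2: _ => [|k y M _ ->]; first by rewrite ent0.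
by rewrite entD.
Qed.

Lemma ent_mul j1 j2 j3 (M : 'M[K]_(dimJ c j1, dimJ c j2)) (N : 'M[K]_(dimJ c j2, dimJ c j3)) a b :
  (ent (M *m N) a b = \sum_(x <- radS c j2) ent M a x * ent N x b)%R.
Proof.
case: (boolP (inR j1 a)) => Ha.
  case: (boolP (inR j3 b)) => Hb.
    case: (ent_nth Ha) => r ->; case: (ent_nth Hb) => s ->.
    rewrite entE mxE (big_nth 0) big_mkord.
    by apply: eq_bigr => t _; rewrite !entE.
  rewrite ent_outr // big1_seq // => x _; by rewrite (ent_outr _ _ Hb) mulr0.
rewrite ent_outl // big1_seq // => x _; by rewrite (ent_outl _ _ Ha) mul0r.
Qed.

Definition mk j1 j2 (F : nat -> nat -> K) : 'M[K]_(dimJ c j1, dimJ c j2) :=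
  \matrix_(r, s) F (nth 0 (radS c j1) r) (nth 0 (radS c j2) s).

Lemma ent_mk j1 j2 F a b :
  ent (mk j1 j2 F) a b = if inR j1 a && inR j2 b then F a b else 0%R.
Proof.
case: (boolP (inR j1 a)) => Ha; last by rewrite !ent_outl.
case: (boolP (inR j2 b)) => Hb; last by rewrite !ent_outr.
case: (ent_nth Ha) => r ->; case: (ent_nth Hb) => s ->.
by rewrite !entE mxE.
Qed.

Lemma ent_act j a b :
  ent (actJ K c j) a b = if [&& inR j a, inR j.+1 b & a == b] then 1%R else 0%R.
Proof.
case: (boolP (inR j a)) => Ha; last by rewrite !ent_outl.
case: (boolP (inR j.+1 b)) => Hb; last by rewrite !ent_outr.
case: (ent_nth Ha) => r ->; case: (ent_nth Hb) => s ->.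
by rewrite !entE mxE.
Qed.

End Ent.
Section Block.
Variable K : fieldType.
Variables (dM dN : nat -> nat).
Variable fM : forall j, 'M[K]_(dM j, dM j.+1).
Variable fN : forall j, 'M[K]_(dN j, dN j.+1).
Variable g : forall j, 'M[K]_(dM j, dN j.+1).

Fixpoint LL (i k : nat) : 'M[K]_(dM i, dN (k + i)) :=
  match k return 'M[K]_(dM i, dN (k + i)) with
  | 0 => 0%R
  | k'.+1 => (LL i k' *m fN (k' + i) + pathmx fM i k' *m g (k' + i))%R
  end.

Lemma path_block i k :
  pathmx (extAct fM fN g) i k =
  (block_mx (pathmx fN i k) 0 (LL i k) (pathmx fM i k) : 'M_(dN i + dM i, dN (k + i) + dM (k + i))).
Proof.
elim: k => [|k IH] /=; first by rewrite scalar_mx_block.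
rewrite IH /extAct mulmx_block.
by rewrite !mulmx0 !mul0mx !addr0 !add0r.
Qed.

End Block.
Definition ee (c : seq nat) (i : nat) : nat := i + nth 0 c i.

Section Nak.
Variable n : nat.
Variable c : seq nat.
Hypothesis Hc : linNakayama n c.

Lemma Hsize : size c = n.+1. Proof. by case: Hc. Qed.
Lemma Hcn : nth 0 c n = 1. Proof. by case: Hc. Qed.
Lemma Hc2 i : i < n -> 2 <= nth 0 c i. Proof. by case: Hc => _ _ H _; apply: H. Qed.
Lemma Hcstep i : i < n -> (nth 0 c i).-1 <= nth 0 c i.+1. Proof. by case: Hc => _ _ _ H; apply: H. Qed.
Lemma Hcbig i : n < i -> nth 0 c i = 0. Proof. by move=> H; rewrite nth_default // Hsize. Qed.

Lemma ee_step i : ee c i <= ee c i.+1.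
Proof.
rewrite /ee; case: (ltngtP i n) => H.
- have := Hcstep H; lia.
- by rewrite Hcbig // Hcbig //; lia.
- by subst i; rewrite Hcn Hcbig //; lia.
Qed.

Lemma ee_mono i j : i <= j -> ee c i <= ee c j.
Proof.
move=> H; rewrite -(subnKC H); elim: (j - i) => [|k IH]; first by rewrite addn0.
by apply: (leq_trans IH); rewrite addnS ee_step.
Qed.

Lemma ee_le i : i <= n -> ee c i <= n.+1.
Proof. by move=> H; apply: (leq_trans (ee_mono H)); rewrite /ee Hcn addn1. Qed.

Lemma ee_ge i : i < n -> i.+2 <= ee c i.
Proof. by move=> H; have := Hc2 H; rewrite /ee; lia. Qed.

Lemma inR_lt j a : inR c j a -> a < n.
Proof.
rewrite /inR => /andP [H1 H2]; case: (ltngtP a n) => // H.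
- by move: H2; rewrite Hcbig //; lia.
- by subst a; move: H2; rewrite Hcn; lia.
Qed.

Lemma inR_ee j a : inR c j a = (a < j) && (j < ee c a).
Proof. by []. Qed.

Lemma dimJ0 j : n.+1 <= j -> dimJ c j = 0.
Proof.
move=> Hj; rewrite /dimJ /radS size_filter; apply/eqP; rewrite -leqn0 leqNgt -has_count.
apply/hasP => [[a]]; rewrite mem_iota Hsize add0n => /andP [_ Ha] /andP [H1 H2].
have := ee_le (Ha : a <= n); rewrite /ee; lia.
Qed.

End Nak.
Lemma sum_delta (K : fieldType) (s : seq nat) (a : nat) (F : nat -> K) : uniq s ->
  (\sum_(y <- s) (if a == y then F y else 0) = if a \in s then F a else 0)%R.
Proof.
move=> Us; case: (boolP (a \in s)) => H.
  rewrite (bigD1_seq a) //= eqxx big1 ?addr0 // => y /negbTE.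
  by rewrite eq_sym => ->.
by rewrite big1_seq // => y /andP [_ Hy]; case: eqP => // E; rewrite E Hy in H.
Qed.

Section Coc.
Variable K : fieldType.
Variable n : nat.
Variable c : seq nat.
Hypothesis Hc : linNakayama n c.

Lemma ent_one j a x :
  ent ((1%:M)%R : 'M[K]_(dimJ c j)) a x = if [&& inR c j a, inR c j x & a == x] then 1%R else 0%R.
Proof.
case: (boolP (inR c j a)) => Ha; last by rewrite !ent_outl.
case: (boolP (inR c j x)) => Hb; last by rewrite !ent_outr.
case: (ent_nth Ha) => r ->; case: (ent_nth Hb) => s ->.
rewrite !entE mxE /= nth_uniq ?radS_uniq ?ltn_ord //.
by rewrite -val_eqE /=; case: (_ == _).
Qed.

Lemma ent_path i k a x :
  ent (pathmx (actJ K c) i k) a x = if [&& inR c i a, inR c (k + i) x & a == x] then 1%R else 0%R.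
Proof.
elim: k x => [|k IH] x /=; first by rewrite ent_one.
rewrite ent_mul.
rewrite (eq_bigr (fun y => if a == y then (if [&& inR c i a, inR c (k + i) a, inR c (k + i).+1 x & a == x] then 1%R else 0%R) else 0%R)); last first.
  move=> y _; rewrite IH ent_act; case: eqP => [<-|_]; last by rewrite !andbF mul0r.
  by case: (inR c i a); case: (inR c (k + i) a); case: (inR c _ x); case: (a == x);
     rewrite /= ?mulr1 ?mul0r ?mulr0.
rewrite sum_delta ?radS_uniq // mem_radS addSn.
case: (boolP (inR c (k + i) a)) => Ha /=; first by [].
case: (boolP (inR c i a)) => Hi //=; case: (boolP (inR c (k + i).+1 x)) => Hx //=.
case: eqP => // E; subst x; move: Ha Hi Hx; rewrite /inR; lia.
Qed.

Lemma J_module i : i < n.+1 -> pathmx (actJ K c) i (nth 0 c i) = 0%R.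
Proof.
move=> Hi; apply: mx_ext => a x; rewrite ent0 ent_path.
case: eqP; rewrite ?andbF // => <-; rewrite andbT.
apply/ifF/negP => /andP [H1 H2].
have Hm : a <= i by move: H1; rewrite /inR; lia.
have := ee_mono Hc Hm; move: H1 H2; rewrite /inR /ee; lia.
Qed.

Lemma ent_LL (g : forall j, 'M[K]_(dimJ c j, dimJ c j.+1)) i k a b :
  ent (LL (actJ K c) (actJ K c) g i k) a b =
  if inR c i a && inR c (k + i) b then (\sum_(t < k) ent (g (t + i)%N) a b)%R else 0%R.
Proof.
elim: k b => [|k IH] b /=; first by rewrite ent0 big_ord0; case: ifP.
rewrite entD !ent_mul.
rewrite (eq_bigr (fun y => if b == y then (if [&& inR c i a, inR c (k + i) b & inR c (k + i).+1 b] then (\sum_(t < k) ent (g (t + i)%N) a b)%R else 0%R) else 0%R)); last first.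
  move=> y _; rewrite IH ent_act; case: (eqVneq b y) => [<-|Hne]; last by rewrite !andbF mulr0.
  rewrite !andbT; by case: (inR c i a); case: (inR c (k + i) b); case: (inR c _ b);
     rewrite /= ?mulr1 ?mul0r ?mulr0.
rewrite sum_delta ?radS_uniq //.
rewrite (eq_bigr (fun y => if a == y then (if inR c i a && inR c (k + i) a then ent (g (k + i)) a b else 0%R) else 0%R)); last first.
  move=> y _; rewrite ent_path; case: eqP => [<-|_]; last by rewrite !andbF mul0r.
  case: (inR c i a); case: (inR c (k + i) a); by rewrite /= ?mul1r ?mul0r.
rewrite sum_delta ?radS_uniq // !mem_radS big_ord_recr /= addSn.
case: (boolP (inR c i a)) => Ha /=; last by rewrite !if_same addr0.
case: (boolP (inR c (k + i).+1 b)) => Hb /=; last by rewrite (ent_outr _ _ Hb) !andbF !if_same addr0.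
rewrite !andbT.
case: (boolP (inR c (k + i) b)) => Hb2; case: (boolP (inR c (k + i) a)) => Ha2 /=.
- by [].
- by rewrite (ent_outl _ _ Ha2) addr0.
- rewrite big1 ?add0r // => t _; apply: ent_outr; move: Hb Hb2; rewrite /inR.
  have := ltn_ord t; lia.
- rewrite (ent_outl _ _ Ha2) big1 ?addr0 // => t _; apply: ent_outr; move: Hb Hb2; rewrite /inR.
  have := ltn_ord t; lia.
Qed.

Definition cocP (g : forall j, 'M[K]_(dimJ c j, dimJ c j.+1)) : Prop :=
  forall i a b, i < n.+1 -> inR c i a -> inR c (nth 0 c i + i) b ->
    (\sum_(t < nth 0 c i) ent (g (t + i)%N) a b = 0)%R.

Lemma cocycle_iff (g : forall j, 'M[K]_(dimJ c j, dimJ c j.+1)) :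
  isCocycle c (actJ K c) (actJ K c) g <-> cocP g.
Proof.
split.
- case=> _ H i a b Hi Ha Hb.
  have := H i; rewrite (Hsize Hc) => /(_ Hi); rewrite path_block => /eqP.
  rewrite block_mx_eq0 => /and4P [_ _ /eqP E2 _].
  have := congr1 (fun M => ent M a b) E2.
  by rewrite ent_LL Ha Hb /= ent0.
- move=> H; split.
    by move=> j; rewrite (Hsize Hc) => Hj; rewrite /extDims (dimJ0 Hc Hj).
  move=> i; rewrite (Hsize Hc) => Hi; rewrite path_block.
  have -> : LL (actJ K c) (actJ K c) g i (nth 0 c i) = 0%R.
    apply: mx_ext => a b; rewrite ent_LL ent0.
    by case: (boolP (inR c i a)) => Ha //; case: (boolP (inR c _ b)) => Hb //; rewrite H.
  by rewrite !J_module // block_mx0.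
Qed.
End Coc.
Lemma sum_shift (K : fieldType) (F : nat -> K) m p :
  (\sum_(t < m + p) F t = \sum_(t < m) F t + \sum_(t < p) F (t + m)%N)%R.
Proof.
elim: p => [|p IH]; first by rewrite addn0 big_ord0 addr0.
by rewrite addnS !big_ord_recr /= IH addrA addnC.
Qed.

Lemma sum_widen (K : fieldType) (F : nat -> K) m p :
  m <= p -> (forall t, m <= t -> F t = 0%R) ->
  (\sum_(t < p) F t = \sum_(t < m) F t)%R.
Proof.
move=> Hmp H; rewrite -(subnKC Hmp) sum_shift.
have -> : (\sum_(t < p - m) F (t + m)%N = 0)%R.
  by apply: big1 => t _; apply: H; rewrite leq_addl.
by rewrite addr0.
Qed.

Lemma telescope_ord (K : fieldType) (H : nat -> K) m :
  (\sum_(j < m) (H j - H j.+1) = H 0 - H m)%R.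
Proof.
elim: m => [|m IH]; first by rewrite big_ord0 subrr.
by rewrite big_ord_recr /= IH addrA subrK.
Qed.

Section ExtMain.
Variable K : fieldType.
Variable n : nat.
Variable c : seq nat.
Hypothesis Hc : linNakayama n c.

Local Notation ee := (ee c).
Local Notation inR := (inR c).

Definition Bb (b : nat) : bool :=
  [exists a : 'I_n, (ee a < ee a.+1) && (a < b < ee a)].

Definition alpha (b : nat) : nat := \max_(a < n | (ee a < ee a.+1) && (a < b)) a.

Definition Ep (a b : nat) : bool :=
  [&& a < n, ee a < ee a.+1, a < b, b < ee a & ee a.+1 == ee b].

Lemma Ep_props a b : Ep a b -> [/\ a < n, ee a < ee a.+1, a < b, b < ee a & ee a.+1 = ee b].
Proof. by case/and5P => H1 H2 H3 H4 /eqP H5. Qed.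

Lemma alpha_spec b : Bb b ->
  [/\ alpha b < n, ee (alpha b) < ee (alpha b).+1, alpha b < b, b < ee (alpha b)
    & forall a, a < n -> ee a < ee a.+1 -> a < b -> a <= alpha b].
Proof.
case/existsP => a0 /andP [J0 /andP [L0 R0]].
have Hmax : forall a, a < n -> ee a < ee a.+1 -> a < b -> a <= alpha b.
  move=> a Ha J L; rewrite /alpha.
  by apply: (leq_bigmax_cond (Ordinal Ha) (F := fun a : 'I_n => nat_of_ord a)); rewrite /= J L.
have Hc0 : 0 < #|[pred a : 'I_n | (ee a < ee a.+1) && (a < b)]|.
  by apply/card_gt0P; exists a0; rewrite inE J0 L0.
case: (eq_bigmax_cond (fun a : 'I_n => nat_of_ord a) Hc0) => a1.
rewrite inE => /andP [J1 L1] E1.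
have E : alpha b = a1 by rewrite /alpha -E1.
rewrite E; split => //.
- have := Hmax a0 (ltn_ord a0) J0 L0; rewrite E => H.
  apply: (leq_trans R0); exact: (ee_mono Hc).
- by rewrite -E.
Qed.

Lemma ee_const0 a d : (forall t, a <= t -> t < a + d -> ~~ (ee t < ee t.+1)) -> ee a = ee (a + d).
Proof.
elim: d => [|d IH] H; first by rewrite addn0.
rewrite IH; last by move=> t H1 H2; apply: H => //; rewrite addnS ltnS ltnW.
apply/eqP; rewrite eqn_leq addnS (ee_step Hc) /=.
by have := H (a + d); rewrite leq_addr addnS ltnSn -leqNgt; apply.
Qed.

Lemma ee_const a b : a <= b -> (forall t, a <= t -> t < b -> ~~ (ee t < ee t.+1)) -> ee a = ee b.
Proof.
move=> Hab H; rewrite -(subnKC Hab); apply: ee_const0 => t H1 H2; apply: H => //.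
by rewrite subnKC in H2.
Qed.

Lemma Ep_iff a b : Ep a b = Bb b && (a == alpha b).
Proof.
apply/idP/idP.
- move/Ep_props => [Ha J L R E].
  have Bbb : Bb b by apply/existsP; exists (Ordinal Ha); rewrite /= J L R.
  rewrite Bbb /=; case: (alpha_spec Bbb) => A1 A2 A3 A4 A5.
  rewrite eqn_leq A5 //= leqNgt; apply/negP => Lt.
  have h1 : ee a.+1 <= ee (alpha b) by apply: (ee_mono Hc).
  have h2 : ee (alpha b).+1 <= ee b by apply: (ee_mono Hc).
  by move: A2 h1 h2; rewrite E; lia.
- case/andP => Bbb /eqP ->; case: (alpha_spec Bbb) => A1 A2 A3 A4 A5.
  rewrite /Ep A1 A2 A3 A4 /=; apply/eqP; apply: ee_const => // t H1 H2.
  apply/negP => J; have Ht : t < n.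
    have := ee_le Hc (ltnW A1); move: A4 H2 => /=; lia.
  by have := A5 t Ht J H2; lia.
Qed.

Lemma Ep_inR a b : Ep a b -> inR b a && inR b.+1 b.
Proof.
move/Ep_props => [Ha J L R E]; rewrite /inR -!/(ee _) L R /=.
by rewrite -E; move: J R; lia.
Qed.

Lemma ent_mul_act_r j1 j (M : 'M[K]_(dimJ c j1, dimJ c j)) a b :
  ent (M *m actJ K c j) a b = if inR j.+1 b then ent M a b else 0%R.
Proof.
rewrite ent_mul.
rewrite (eq_bigr (fun y => if b == y then (if inR j.+1 b then ent M a b else 0%R) else 0%R)); last first.
  move=> y _; rewrite ent_act; case: (eqVneq b y) => [<-|Hne]; last by rewrite !andbF mulr0.
  rewrite ?eqxx ?andbT; case: (boolP (inR j b)) => Hb; last by rewrite (ent_outr _ _ Hb) mul0r; case: ifP.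
  by case: (inR j.+1 b); rewrite /= ?mulr1 ?mulr0.
rewrite sum_delta ?radS_uniq // mem_radS.
case: (boolP (inR j b)) => Hb //; rewrite (ent_outr _ _ Hb); by case: ifP.
Qed.

Lemma ent_mul_act_l j j2 (M : 'M[K]_(dimJ c j.+1, dimJ c j2)) a b :
  ent (actJ K c j *m M) a b = if inR j a then ent M a b else 0%R.
Proof.
rewrite ent_mul.
rewrite (eq_bigr (fun y => if a == y then (if inR j a then ent M a b else 0%R) else 0%R)); last first.
  move=> y _; rewrite ent_act; case: (eqVneq a y) => [<-|Hne]; last by rewrite !andbF mul0r.
  rewrite ?eqxx ?andbT; case: (boolP (inR j.+1 a)) => Ha; last by rewrite (ent_outl _ _ Ha) mulr0; case: ifP.
  by case: (inR j a); rewrite /= ?mul1r ?mul0r.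
rewrite sum_delta ?radS_uniq // mem_radS.
case: (boolP (inR j.+1 a)) => Ha //; rewrite (ent_outl _ _ Ha); by case: ifP.
Qed.


Lemma sum_ord_delta (X : K) b m : b < m ->
  (\sum_(t < m) (if (t : nat) == b then X else 0) = X)%R.
Proof.
move=> Hb; rewrite (bigD1 (Ordinal Hb)) //= eqxx big1 ?addr0 // => t Ht.
case: eqP => // E; move: Ht; by rewrite -val_eqE /= E eqxx.
Qed.

Definition Phi (G : nat -> K) a : K := (\sum_(t < ee a) G t)%R.
Definition Gp (G : nat -> K) a b t : K := (G t - (if Ep a b && (t == b) then Phi G a else 0))%R.
Definition Sp (G : nat -> K) a b j : K := (\sum_(t < j) Gp G a b t)%R.
Definition Hp (G : nat -> K) a b j : K := if inR j a && inR j b then (- Sp G a b j)%R else 0%R.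

Lemma scalar_decomp (G : nat -> K) a b j :
  (forall t, ~~ (inR t a && inR t.+1 b) -> G t = 0%R) ->
  (b < ee a -> ee a < ee b -> ~~ Ep a b -> (\sum_(t < ee a) G t = 0)%R) ->
  (G j = (if [&& inR j a, inR j.+1 b, Ep a b & j == b] then Phi G a else 0)
        + ((if inR j.+1 b then Hp G a b j else 0) - (if inR j a then Hp G a b j.+1 else 0)))%R.
Proof.
move=> HG Hcoc.
have HG' : forall t, ~~ (inR t a && inR t.+1 b) -> Gp G a b t = 0%R.
  move=> t Ht; rewrite /Gp HG //; case: (boolP (Ep a b && (t == b))) => E; last by rewrite subr0.
  by case/andP: E => E /eqP Et; subst t; move: Ht; rewrite Ep_inR.
have Srec : forall j, Sp G a b j.+1 = (Sp G a b j + Gp G a b j)%R.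
  by move=> i; rewrite /Sp big_ord_recr.
have S0 : forall j, j <= b -> Sp G a b j = 0%R.
  move=> i Hi; apply: big1 => t _; apply: HG'; apply/negP => /andP [_].
  by rewrite /inR => /andP [h _]; have := ltn_ord t; lia.
have Gsum : b < ee a -> ee a < ee b -> Sp G a b (ee a) = 0%R.
  move=> h1 h2; rewrite /Sp /Gp sumrB; case: (boolP (Ep a b)) => E /=.
    by rewrite sum_ord_delta // subrr.
  by rewrite big1_eq subr0; apply: Hcoc.
case: (boolP (inR j a)) => Ha /=; last first.
  by rewrite HG ?(negbTE Ha) // /Hp (negbTE Ha) /= if_same subr0 add0r.
case: (boolP (inR j.+1 b)) => Hb /=; last first.
  by rewrite HG ?Ha ?(negbTE Hb) // /Hp (negbTE Hb) andbF /= subr0 add0r.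
have -> : G j = (Gp G a b j + (if Ep a b && (j == b) then Phi G a else 0))%R by rewrite /Gp subrK.
rewrite addrC; congr (_ + _)%R.
rewrite /Hp /=.
case: (boolP (inR j b)) => Hb2; case: (boolP (inR j.+1 a)) => Ha2; rewrite /= ?Ha ?Hb /=.
- by rewrite Srec; ring.
- have Hj : j.+1 = ee a by move: Ha Ha2; rewrite /inR /ee; lia.
  have E0 : Sp G a b j.+1 = 0%R.
    rewrite Hj; apply: Gsum; move: Hb Hb2 Ha; rewrite /inR -/(ee _) -Hj; lia.
  rewrite Srec in E0.
  have -> : Gp G a b j = ((Sp G a b j + Gp G a b j) - Sp G a b j)%R by ring.
  by rewrite E0 sub0r subr0.
- have Hj : j = b by move: Hb Hb2; rewrite /inR; lia.
  by rewrite Srec S0 ?Hj //; ring.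
- have Hj : j = b by move: Hb Hb2; rewrite /inR; lia.
  have Hj2 : j.+1 = ee a by move: Ha Ha2; rewrite /inR /ee; lia.
  have E0 : Sp G a b j.+1 = 0%R.
    rewrite Hj2; apply: Gsum; move: Hb; rewrite /inR -/(ee _) -Hj2 Hj; lia.
  by rewrite Srec S0 ?Hj // add0r in E0; rewrite Hj E0 subr0.
Qed.

End ExtMain.
Section ExtMain2.
Variable K : fieldType.
Variable n : nat.
Variable c : seq nat.
Hypothesis Hc : linNakayama n c.

Local Notation ee := (ee c).
Local Notation inR := (inR c).
Local Notation Ep := (Ep n c).
Local Notation alpha := (alpha n c).
Local Notation Bb := (Bb n c).

Definition zb s (beta : 'I_s -> nat) (k : 'I_s) (j : nat) : 'M[K]_(dimJ c j, dimJ c j.+1) :=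
  mk c j j.+1 (fun a b => if [&& a == alpha (beta k), b == beta k & j == beta k] then 1%R else 0%R).

Lemma sumz s (beta : 'I_s -> nat) (x : 'I_s -> K) j a b :
  injective beta -> (forall k, Bb (beta k)) ->
  (\sum_(k < s) x k * ent (zb beta k j) a b)%R =
  if Ep a b then
    (\sum_(k < s) (if beta k == b then (if inR j a && inR j.+1 b && (j == b) then x k else 0) else 0))%R
  else 0%R.
Proof.
move=> Binj BB; case: (boolP (Ep a b)) => E.
  apply: eq_bigr => k _; rewrite ent_mk.
  case: (eqVneq (beta k) b) => Eb; last first.
    by rewrite /= andbF if_same mulr0.
  have Ea : a == alpha (beta k) by move: E; rewrite (Ep_iff Hc) Eb => /andP [].
  rewrite Ea /=; case: (inR j a && inR j.+1 b) => //=; last by rewrite mulr0.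
  by rewrite Eb; case: (j == b); rewrite ?mulr1 ?mulr0.
apply: big1 => k _; rewrite ent_mk; case: ifP => _; last by rewrite mulr0.
case: ifP; last by rewrite mulr0.
case/and3P => /eqP Ea /eqP Eb _; move: E; rewrite (Ep_iff Hc) Eb BB Ea eqxx.
by [].
Qed.

Lemma sumz_Ep s (beta : 'I_s -> nat) (x : 'I_s -> K) j a b k0 :
  injective beta -> (forall k, Bb (beta k)) -> Ep a b -> beta k0 = b ->
  (\sum_(k < s) x k * ent (zb beta k j) a b)%R =
  if inR j a && inR j.+1 b && (j == b) then x k0 else 0%R.
Proof.
move=> Binj BB E Ek0; rewrite sumz // E (bigD1 k0) //= Ek0 eqxx big1 ?addr0 //.
move=> k Hk; case: eqP => // Eb; move: Hk; rewrite -Ek0 in Eb.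
by rewrite (Binj _ _ Eb) eqxx.
Qed.


Lemma Hcoc_from (g : forall j, 'M[K]_(dimJ c j, dimJ c j.+1)) a b :
  cocP n g -> b < ee a -> ee a < ee b -> ~~ Ep a b ->
  (\sum_(t < ee a) ent (g t) a b = 0)%R.
Proof.
move=> Hg h1 h2 NE.
case: (ltnP a n) => Han; last first.
  apply: big1 => t _; apply: ent_outl; apply/negP => H; have := inR_lt Hc H; lia.
have Hi : a.+1 < n.+1 by [].
have Ha : inR a.+1 a by rewrite /inR -/(ee _); have := ee_ge Hc Han; lia.
have Hab : a < b.
  rewrite ltnNge; apply/negP => Hba; have := ee_mono Hc Hba; lia.
have Hee : ee a.+1 < ee b.
  have h3 := ee_mono Hc (Hab : a.+1 <= b).
  have h4 := ee_step Hc a.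
  case: (ltngtP (ee a.+1) (ee b)) => // E; first by lia.
  exfalso; move: NE; rewrite /Ep Han Hab h1 E eqxx /= andbT.
  by case: (ltngtP (ee a) (ee a.+1)) h4 => //; rewrite E; lia.
have Hb : inR (nth 0 c a.+1 + a.+1) b.
  rewrite /inR -/(ee _) addnC -/(ee _).
  by have := ee_step Hc a; lia.
have HH := Hg _ _ _ Hi Ha Hb.
rewrite -(@sum_widen _ (fun t => ent (g t) a b) (ee a) (ee a.+1)); last first.
- move=> t Ht; apply: ent_outl; rewrite /inR -/(ee _); lia.
- exact: (ee_step Hc).
rewrite /ee (sum_shift (fun t => ent (g t) a b)) big1 ?add0r //.
move=> t _; apply: ent_outl; rewrite /inR; have := ltn_ord t; lia.
Qed.

Lemma ext_main s (beta : 'I_s -> nat) :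
  injective beta -> (forall k, Bb (beta k)) -> (forall b, Bb b -> exists k, beta k = b) ->
  Ext1_iso_Kpow c (actJ K c) (actJ K c) s.
Proof.
move=> Binj BB Bsurj.
exists (zb beta); split.
- move=> k; apply/(cocycle_iff Hc) => i a b Hi Ha Hb; apply: big1 => t _; rewrite ent_mk.
  case: ifP => // _; case: ifP => // /and3P [/eqP Ea /eqP Eb _].
  have E : Ep a b by rewrite (Ep_iff Hc) Eb BB Ea eqxx.
  case: (Ep_props E) => _ _ _ _ E2.
  move: Ha Hb; rewrite /inR -!/(ee _) => /andP [Ha _] /andP [_ Hb].
  have := ee_mono Hc (Ha : a.+1 <= i); rewrite /ee in E2 Hb *; lia.
- move=> g Hg; have Hg' := (cocycle_iff Hc g).1 Hg.
  exists (fun k => Phi c (fun t => ent (g t) (alpha (beta k)) (beta k)) (alpha (beta k))).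
  exists (fun j => mk c j j (fun a b => (- Sp n c (fun t => ent (g t) a b) a b j)%R)).
  move=> j; apply: mx_ext => a b.
  rewrite /coboundary entD ent_sum entB ent_mul_act_r ent_mul_act_l !ent_mk.
  under eq_bigr => k _ do rewrite entZ.
  have -> : (\sum_(k < s) Phi c (fun t => ent (g t) (alpha (beta k)) (beta k)) (alpha (beta k)) *
         ent (zb beta k j) a b)%R =
         if [&& inR j a, inR j.+1 b, Ep a b & j == b] then Phi c (fun t => ent (g t) a b) a else 0%R.
    case: (boolP (Ep a b)) => E; last by rewrite sumz // (negbTE E) !andbF.
    have Bbb : Bb b by move: E; rewrite (Ep_iff Hc) => /andP [].
    case: (Bsurj b Bbb) => k0 Ek0.
    rewrite (sumz_Ep _ _ Binj BB E Ek0) /= -andbA.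
    have Ea : a = alpha b by move: E; rewrite (Ep_iff Hc) => /andP [_ /eqP].
    by rewrite Ek0 -Ea.
  have := @scalar_decomp K n c (fun t => ent (g t) a b) a b j; rewrite /Hp /=; apply.
  + move=> t; case: (boolP (inR t a)) => Ha /=; last by move=> _; apply: ent_outl.
    by move=> Hb; apply: ent_outr.
  + exact: Hcoc_from.
- move=> xs h Heq k.
  set a := alpha (beta k); set b := beta k.
  have E : Ep a b by rewrite (Ep_iff Hc) BB eqxx.
  case: (Ep_props E) => Han J Lab Rb E2.
  have L : (\sum_(j < ee a) ent (\sum_(k0 < s) xs k0 *: zb beta k0 j) a b = xs k)%R.
    under eq_bigr => j _ do rewrite ent_sum; under eq_bigr => j _ do under eq_bigr => k1 _ do rewrite entZ.
    under eq_bigr => j _ do rewrite (sumz_Ep _ _ Binj BB E (erefl b)).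
    rewrite -[in RHS](sum_ord_delta (xs k) Rb); apply: eq_bigr => j _.
    case: (eqVneq (j : nat) b) => Ej; last by rewrite andbF.
    by move: (Ep_inR E); rewrite Ej => ->.
  have R : (\sum_(j < ee a) ent (coboundary (actJ K c) (actJ K c) h j) a b = 0)%R.
    rewrite /coboundary.
    under eq_bigr => j _ do rewrite entB ent_mul_act_r ent_mul_act_l.
    have Hsupp : forall j, ~~ (inR j a && inR j b) -> ent (h j) a b = 0%R.
      move=> j; case: (boolP (inR j a)) => Ha /=; last by move=> _; apply: ent_outl.
      by move=> Hb; apply: ent_outr.
    rewrite (eq_bigr (fun j : 'I_(ee a) => ent (h j) a b - ent (h (j : nat).+1) a b)%R).
      by rewrite (telescope_ord (fun j => ent (h j) a b)) !ent_outl ?subrr //;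
         rewrite /inR -/(ee _) ?ltnn ?andbF.
    move=> j _; congr (_ - _)%R.
      case: (boolP (inR j.+1 b)) => Hb //; rewrite Hsupp //; apply/negP => /andP [Ha Hb2].
      move: Hb Ha Hb2; rewrite /inR -!/(ee _); have := ltn_ord j; lia.
    case: (boolP (inR j a)) => Ha //; rewrite Hsupp //; apply/negP => /andP [Ha2 Hb2].
    move: Ha Ha2 Hb2; rewrite /inR -!/(ee _); have := ltn_ord j; lia.
  apply: (etrans (esym L)); rewrite -[RHS]R; apply: eq_bigr => j _; by rewrite Heq.
Qed.

End ExtMain2.
Lemma valE m (y : 'I_m) : val y = nat_of_ord y. Proof. by []. Qed.

Section Perm.
Variable n : nat.

Lemma perm_closed (p : 'S_n) (A : {set 'I_n}) :
  (forall x, x \in A -> p x \in A) -> forall x, p x \in A -> x \in A.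
Proof.
move=> H.
have sub : p @: A \subset A by apply/subsetP => y /imsetP [x Hx ->]; exact: H.
have E : p @: A = A.
  by apply/eqP; rewrite eqEcard sub card_imset ?leqnn //; exact: perm_inj.
by move=> x; rewrite -{1}E mem_imset //; exact: perm_inj.
Qed.

Lemma pigeon1 (p : 'S_n) (i : nat) :
  (exists x : 'I_n, (x <= i) && (i < p x)) -> exists y : 'I_n, (i < y) && (p y <= i).
Proof.
move=> [x /andP [Hx Hpx]]; apply/existsP; apply/negP => /existsP Hn.
have H : forall y, y \in [set y : 'I_n | i < y] -> p y \in [set y : 'I_n | i < y].
  move=> y; rewrite !inE => Hy; rewrite ltnNge; apply/negP => Hpy; apply: Hn.
  by exists y; rewrite Hy Hpy.
have := perm_closed H (x := x); rewrite !inE Hpx => /(_ isT); lia.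
Qed.

Lemma pigeon2 (p : 'S_n) (i : nat) :
  (exists y : 'I_n, (i < y) && (p y <= i)) -> exists x : 'I_n, (x <= i) && (i < p x).
Proof.
move=> [y /andP [Hy Hpy]]; apply/existsP; apply/negP => /existsP Hn.
have H : forall x, x \in [set x : 'I_n | x <= i] -> p x \in [set x : 'I_n | x <= i].
  move=> x; rewrite !inE => Hx; rewrite leqNgt; apply/negP => Hpx; apply: Hn.
  by exists x; rewrite Hx Hpx.
have := perm_closed H (x := y); rewrite !inE Hpy => /(_ isT); lia.
Qed.

Lemma word_prod_cons (ab : 'I_n * 'I_n) w :
  word_prod (ab :: w) = (tperm ab.1 ab.2 * word_prod w)%g.
Proof. by rewrite /word_prod big_cons. Qed.

Lemma word_prod_cat (w1 w2 : seq ('I_n * 'I_n)) :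
  word_prod (w1 ++ w2) = (word_prod w1 * word_prod w2)%g.
Proof. by rewrite /word_prod big_cat. Qed.

Lemma word_prod_nil : word_prod [::] = (1 : 'S_n)%g.
Proof. by rewrite /word_prod big_nil. Qed.

Lemma tperm_val (a b u : 'I_n) :
  val (tperm a b u) = if u == a then val b else if u == b then val a else val u.
Proof.
case: tpermP => [->|->|H1 H2]; rewrite ?eqxx //.
  by case: eqP => // ->.
by move/eqP/negbTE: H1 => ->; move/eqP/negbTE: H2 => ->.
Qed.

Lemma stab_word (w : seq ('I_n * 'I_n)) (i : nat) :
  adj_word w -> (forall ab, ab \in w -> val ab.1 != i) ->
  forall x : 'I_n, x <= i -> word_prod w x <= i.
Proof.
elim: w => [|ab w IH] Hadj Hw x Hx; first by rewrite word_prod_nil perm1.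
move: Hadj => /andP [/eqP Hab Hadj].
rewrite word_prod_cons permM; apply: IH => //.
  by move=> ab' Hab'; apply: Hw; rewrite inE Hab' orbT.
have Hi : val ab.1 != i by apply: Hw; rewrite inE eqxx.
rewrite tperm_val; case: eqP => [E|_].
  rewrite Hab; have E' : val x = val ab.1 by rewrite E.
  by move/eqP: Hi; move: Hx E'; rewrite !valE; lia.
case: eqP => [E|_] //; have E' : val x = val ab.2 by rewrite E.
by move: Hx E'; rewrite Hab !valE; lia.
Qed.

Definition InvS (p : 'S_n) : {set 'I_n * 'I_n} :=
  [set xy : 'I_n * 'I_n | (xy.1 < xy.2) && (p xy.2 < p xy.1)].
Definition inv (p : 'S_n) : nat := #|InvS p|.

Definition P0 (p : 'S_n) (a b : 'I_n) : 'I_n * 'I_n :=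
  let x0 := (p^-1)%g a in let y0 := (p^-1)%g b in
  if x0 < y0 then (x0, y0) else (y0, x0).

Lemma tperm_order (a b u v : 'I_n) : val b = (val a).+1 ->
  ~~ ((u == a) && (v == b)) -> ~~ ((u == b) && (v == a)) ->
  (tperm a b v < tperm a b u) = (v < u).
Proof.
move=> Hb H1 H2; rewrite !tperm_val.
move: H1 H2; rewrite -!val_eqE /= Hb.
case: (eqVneq (val u) (val a)) => Eu; case: (eqVneq (val v) (val a)) => Ev;
case: (eqVneq (val u) (val a).+1) => Eu2; case: (eqVneq (val v) (val a).+1) => Ev2;
rewrite /= ?andbT ?andbF //= => _ _; move: Eu Ev Eu2 Ev2; rewrite !valE => *; apply/idP/idP; lia.
Qed.

Lemma inv_step1 (p : 'S_n) (a b : 'I_n) xy : val b = (val a).+1 -> xy != P0 p a b ->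
  (xy \in InvS (p * tperm a b)%g) = (xy \in InvS p).
Proof.
move=> Hb Hne; rewrite !inE !permM.
case: (boolP (xy.1 < xy.2)) => Hlt //=.
apply: tperm_order => //; apply/negP => /andP [/eqP E1 /eqP E2]; move/negP: Hne; apply.
- have e1 : xy.1 = (p^-1)%g a by rewrite -E1 permK.
  have e2 : xy.2 = (p^-1)%g b by rewrite -E2 permK.
  by rewrite /P0 -e1 -e2 Hlt; case: xy Hlt e1 e2 {E1 E2}.
- have e1 : xy.1 = (p^-1)%g b by rewrite -E1 permK.
  have e2 : xy.2 = (p^-1)%g a by rewrite -E2 permK.
  by rewrite /P0 -e1 -e2 ltnNge (ltnW Hlt) /=; case: xy Hlt e1 e2 {E1 E2}.
Qed.

Lemma inv_step2 (p : 'S_n) (a b : 'I_n) : val b = (val a).+1 ->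
  (P0 p a b \in InvS (p * tperm a b)%g) = ~~ (P0 p a b \in InvS p).
Proof.
move=> Hb; have Hab : a != b by rewrite -val_eqE Hb /=; lia.
have Hne : (p^-1)%g a != (p^-1)%g b by apply/negP => /eqP /(can_inj (permKV p)) /eqP; rewrite (negbTE Hab).
rewrite /P0; case: (ltngtP ((p^-1)%g a) ((p^-1)%g b)) => H; rewrite !inE /= ?H /= !permM !permKV ?tpermL ?tpermR.
- by rewrite Hb ltnSn ltnNge leqnSn.
- by rewrite Hb ltnSn ltnNge leqnSn.
- by move: Hne; rewrite -val_eqE /= H eqxx.
Qed.

Lemma inv_step (p : 'S_n) (a b : 'I_n) : val b = (val a).+1 ->
  inv (p * tperm a b)%g + (P0 p a b \in InvS p) = inv p + (P0 p a b \in InvS (p * tperm a b)%g).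
Proof.
move=> Hb; rewrite /inv (cardsD1 (P0 p a b) (InvS p)) (cardsD1 (P0 p a b) (InvS _)).
have -> : InvS (p * tperm a b)%g :\ P0 p a b = InvS p :\ P0 p a b.
  by apply/setP => xy; rewrite !in_setD1; case: (boolP (xy == P0 p a b)) => //= H; rewrite inv_step1.
move: (P0 p a b \in _) (P0 p a b \in InvS p) (#|_|) => u v w; lia.
Qed.

Lemma inv_step_bound (p : 'S_n) (a b : 'I_n) : val b = (val a).+1 ->
  inv (p * tperm a b)%g <= (inv p).+1.
Proof. by move=> Hb; have := inv_step p Hb; rewrite inv_step2 //; case: (_ \in _) => /=; lia. Qed.

Lemma inv_step_up (p : 'S_n) (a b : 'I_n) : val b = (val a).+1 ->
  inv (p * tperm a b)%g = (inv p).+1 -> InvS p \subset InvS (p * tperm a b)%g.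
Proof.
move=> Hb E; have := inv_step p Hb; rewrite inv_step2 // E.
case: (boolP (P0 p a b \in InvS p)) => H /=; first by lia.
move=> _; apply/subsetP => xy Hxy; rewrite inv_step1 //.
by apply/negP => /eqP E2; rewrite -E2 Hxy in H.
Qed.

Lemma inv_word_bound (q : 'S_n) (u : seq ('I_n * 'I_n)) :
  adj_word u -> inv (q * word_prod u)%g <= inv q + size u.
Proof.
elim: u q => [|ab u IH] q; first by rewrite word_prod_nil mulg1 addn0.
move=> /andP [/eqP Hab Hu]; rewrite word_prod_cons mulgA.
apply: leq_trans (IH _ Hu) _; rewrite /= addnS -addSn leq_add2r; exact: inv_step_bound.
Qed.

Lemma inv_word_mono (q : 'S_n) (u : seq ('I_n * 'I_n)) :
  adj_word u -> inv (q * word_prod u)%g = inv q + size u ->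
  InvS q \subset InvS (q * word_prod u)%g.
Proof.
elim: u q => [|ab u IH] q; first by rewrite word_prod_nil mulg1.
move=> /andP [/eqP Hab Hu]; rewrite word_prod_cons mulgA => E.
have h1 := inv_word_bound (q * tperm ab.1 ab.2)%g Hu.
have h2 := inv_step_bound q Hab.
have E1 : inv (q * tperm ab.1 ab.2)%g = (inv q).+1.
  apply/eqP; rewrite eqn_leq h2 /= -(leq_add2r (size u)).
  by rewrite E /= addnS -addSn in h1.
apply: subset_trans (inv_step_up Hab E1) _.
by apply: IH => //; rewrite E E1 /= addSn addnS.
Qed.


Lemma incr_ge (f : 'I_n -> 'I_n) : (forall x y : 'I_n, x < y -> f x < f y) -> forall x : 'I_n, x <= f x.
Proof.
move=> Hf; suff H : forall k (x : 'I_n), val x = k -> k <= f x by move=> x; exact: H.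
elim=> [|k IH] x Hx //.
have hk : k < n by have := ltn_ord x; rewrite valE in Hx; lia.
have := IH (Ordinal hk) erefl; have := Hf (Ordinal hk) x; rewrite valE in Hx; rewrite /= Hx ltnSn.
move=> /(_ isT); lia.
Qed.

Lemma perm_incr_id (p : 'S_n) : (forall x y : 'I_n, x < y -> p x < p y) -> p = 1%g.
Proof.
move=> Hp.
have Hq : forall x y : 'I_n, x < y -> (p^-1)%g x < (p^-1)%g y.
  move=> x y Hxy; case: (ltngtP ((p^-1)%g x) ((p^-1)%g y)) => // H.
    by have := Hp _ _ H; rewrite !permKV; lia.
  have : x = y by apply: (can_inj (permKV p)); apply: val_inj; rewrite /= H.
  by move=> E; rewrite E ltnn in Hxy.
apply/permP => x; rewrite perm1; apply: val_inj => /=.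
have h1 := incr_ge Hp x; have h2 := incr_ge Hq (p x); rewrite permK in h2; lia.
Qed.

Lemma inv0_id (p : 'S_n) : inv p = 0 -> p = 1%g.
Proof.
move=> /cards0_eq E; apply: perm_incr_id => x y Hxy.
case: (ltngtP (p x) (p y)) => // H.
  have : (x, y) \in InvS p by rewrite inE /= Hxy H.
  by rewrite E inE.
have : x = y by apply: (@perm_inj _ p); apply: val_inj.
by move=> E2; rewrite E2 ltnn in Hxy.
Qed.

Lemma inv1 : inv (1 : 'S_n)%g = 0.
Proof.
apply/eqP; rewrite cards_eq0; apply/eqP/setP => xy; rewrite !inE !perm1.
by case: (ltnP xy.1 xy.2) => //= H; rewrite ltnNge (ltnW H).
Qed.

Lemma incr_consec (f : 'I_n -> nat) : (forall a b : 'I_n, val b = (val a).+1 -> f a < f b) ->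
  forall x y : 'I_n, x < y -> f x < f y.
Proof.
move=> Hf.
suff H : forall d (x y : 'I_n), val y = val x + d.+1 -> f x < f y.
  move=> x y Hxy; apply: (H (y - x).-1); rewrite !valE; lia.
elim=> [|d IH] x y Hy; first by apply: Hf; rewrite Hy addn1.
have hk : val x + d.+1 < n by have := ltn_ord y; rewrite Hy !valE; lia.
apply: (ltn_trans (IH x (Ordinal hk) erefl)); apply: Hf; rewrite Hy /=; lia.
Qed.

Lemma descent (p : 'S_n) : 0 < inv p ->
  exists a b : 'I_n, val b = (val a).+1 /\ P0 p a b \in InvS p.
Proof.
move=> Hpos.
case: (pickP (fun ab : 'I_n * 'I_n => (val ab.2 == (val ab.1).+1) && (P0 p ab.1 ab.2 \in InvS p))).
  by move=> [a b] /andP [/eqP Hb H]; exists a, b.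
move=> Hn; exfalso.
have Hinc : forall a b : 'I_n, val b = (val a).+1 -> (p^-1)%g a < (p^-1)%g b.
  move=> a b Hb; case: (ltngtP ((p^-1)%g a) ((p^-1)%g b)) => // H.
    have := Hn (a, b); rewrite /= Hb eqxx /=.
    rewrite /P0 ltnNge (ltnW H) /= inE /= H /= !permKV; rewrite !valE in Hb; lia.
  have : a = b by apply: (can_inj (permKV p)); apply: val_inj; rewrite /= H.
  by move=> E; rewrite E !valE in Hb; lia.
have := incr_consec (f := fun x => nat_of_ord ((p^-1)%g x)) Hinc.
move=> /perm_incr_id /(congr1 (fun q => (q^-1)%g)); rewrite invgK invg1 => Ep.
by move: Hpos; rewrite Ep inv1.
Qed.

Lemma bubble k (p : 'S_n) : inv p <= k ->
  exists u, [/\ adj_word u, word_prod u = p & size u <= inv p].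
Proof.
elim: k p => [|k IH] p Hk.
  by exists [::]; split => //; rewrite word_prod_nil (inv0_id (_ : inv p = 0)) //; lia.
case: (posnP (inv p)) => Hp.
  by exists [::]; split => //; rewrite word_prod_nil (inv0_id Hp).
case: (descent Hp) => a [b [Hb Hin]].
have := inv_step p Hb; rewrite inv_step2 // Hin /= => Hq.
case: (IH (p * tperm a b)%g) => [|u [Hu1 Hu2 Hu3]]; first by lia.
exists (u ++ [:: (a, b)]); split.
- by rewrite /adj_word all_cat; apply/andP; split => //=; rewrite Hb eqxx.
- by rewrite word_prod_cat word_prod_cons word_prod_nil mulg1 Hu2 -mulgA tperm2 mulg1.
- by rewrite size_cat /=; lia.
Qed.


Lemma supp_word (pi : 'S_n) (w : seq ('I_n * 'I_n)) (i : nat) :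
  reduced_word pi w ->
  (exists2 ab, ab \in w & val ab.1 = i) <-> (exists x : 'I_n, (x <= i) && (i < pi x)).
Proof.
case=> Hadj Hw Hmin; split; last first.
  move=> Hx; case: (boolP (has (fun ab : 'I_n * 'I_n => val ab.1 == i) w)).
    by move=> /hasP [ab H /eqP E]; exists ab.
  move=> /hasPn Hn; case: Hx => x /andP [H1 H2].
  suff : pi x <= i by lia.
  rewrite -Hw; apply: (stab_word Hadj) => // ab Hab; exact: Hn.
move=> [[a b] Hab /= Hi].
case: (boolP [exists x : 'I_n, (x <= i) && (i < pi x)]); first by move=> /existsP.
move=> Hns; exfalso.
have Hstab : forall x : 'I_n, x <= i -> pi x <= i.
  move=> x Hx; rewrite leqNgt; apply/negP => H; move/negP: Hns; apply; apply/existsP; exists x; by rewrite Hx.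
have Hstab2 : forall y : 'I_n, i < y -> i < pi y.
  move=> y Hy; rewrite ltnNge; apply/negP => H.
  case: (pigeon2 (ex_intro _ y (introT andP (conj Hy H)))) => x /andP [h1 h2].
  by have := Hstab x h1; lia.
have NoCross : forall x y : 'I_n, x <= i -> i < y -> (x, y) \notin InvS pi.
  move=> x y Hx Hy; rewrite inE /= negb_and; apply/orP; right.
  by have := Hstab x Hx; have := Hstab2 y Hy; lia.
case: (bubble (leqnn (inv pi))) => u [Hu1 Hu2 Hu3].
have Hsw : size w <= inv pi by apply: (leq_trans (Hmin u Hu1 Hu2)).
have Hlow : inv pi <= size w by have := inv_word_bound 1%g Hadj; rewrite mul1g Hw inv1.
case/splitPr: Hab Hadj Hw Hsw Hlow => w1 w2.
rewrite /adj_word all_cat /= => /and3P [Hadj1 /eqP Hb Hadj2] Hw Hsw Hlow.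
set p1 := word_prod w1; set p2 := (p1 * tperm a b)%g.
have Epi : pi = (p2 * word_prod w2)%g by rewrite -Hw word_prod_cat word_prod_cons /p2 mulgA.
have h1 : inv p1 <= size w1 by have := inv_word_bound 1%g Hadj1; rewrite mul1g inv1.
have h2 : inv p2 <= (inv p1).+1 by apply: inv_step_bound.
have h3 : inv pi <= inv p2 + size w2 by rewrite Epi; apply: inv_word_bound.
have Sz : size (w1 ++ (a, b) :: w2) = size w1 + (size w2).+1 by rewrite size_cat.
have E2 : inv pi = inv p2 + size w2.
  move: Hsw Hlow h1 h2 h3; rewrite Sz; clear; move: (inv pi) (inv p1) (inv p2) => u v x; lia.
have E1 : inv p2 = (inv p1).+1.
  move: Hsw Hlow h1 h2 h3; rewrite Sz; clear; move: (inv pi) (inv p1) (inv p2) => u v x; lia.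
have Hsub : InvS p2 \subset InvS pi by rewrite Epi; apply: inv_word_mono => //; rewrite -Epi.
have HP0 : P0 p1 a b \in InvS p2.
  have := inv_step p1 Hb; rewrite inv_step2 // -/p2 E1.
  by case: (P0 p1 a b \in InvS p1) => /=; lia.
have Cross : forall x y : 'I_n, x <= i -> i < y -> (x, y) \notin InvS p2.
  by move=> x y Hx Hy; apply/negP => H; move: (NoCross x y Hx Hy); rewrite (subsetP Hsub _ H).
set x0 := (p1^-1)%g a; set y0 := (p1^-1)%g b.
have Px0 : p2 x0 = b by rewrite /p2 permM permKV tpermL.
have Py0 : p2 y0 = a by rewrite /p2 permM permKV tpermR.
have Hxy : x0 < y0.
  move: HP0; rewrite /P0 -/x0 -/y0; case: ifP => // _; rewrite inE /= Px0 Py0.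
  by move: Hb; rewrite ?valE; lia.
case: (leqP x0 i) => Hx0.
  have := pigeon1 (ex_intro _ x0 (introT andP (conj Hx0 (_ : i < p2 x0)))).
  rewrite Px0 => /(_ _) [|y /andP [Hy1 Hy2]]; first by move: Hb Hi; rewrite ?valE; lia.
  by move: (Cross x0 y Hx0 Hy1); rewrite inE /= Px0 negb_and; move: Hb Hi Hy2; rewrite ?valE; lia.
have Hy0 : i < y0 by lia.
have := pigeon2 (ex_intro _ y0 (introT andP (conj Hy0 (_ : p2 y0 <= i)))).
rewrite Py0 => /(_ _) [|x /andP [Hx1 Hx2]]; first by move: Hi; rewrite ?valE; lia.
by move: (Cross x y0 Hx1 Hy0); rewrite inE /= Py0 negb_and; move: Hi Hx2 Hxy; rewrite ?valE; lia.
Qed.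

Lemma supp_count (pi : 'S_n) (w : seq ('I_n * 'I_n)) :
  reduced_word pi w ->
  size (undup w) = #|[set i : 'I_n | [exists x : 'I_n, (x <= i) && (i < pi x)]]|.
Proof.
move=> Hred; have Hadj : adj_word w by case: Hred.
have Hinj : {in undup w &, injective (fun ab : 'I_n * 'I_n => ab.1)}.
  move=> [a1 b1] [a2 b2]; rewrite !mem_undup => H1 H2 /= E; subst a2.
  move: Hadj => /allP Hadj; have := Hadj _ H1; have := Hadj _ H2 => /= /eqP e2 /eqP e1.
  by congr (_, _); apply: val_inj; exact: (etrans e1 (esym e2)).
rewrite -(size_map (fun ab : 'I_n * 'I_n => ab.1)).
rewrite -(card_uniqP _); last by rewrite (map_inj_in_uniq Hinj) undup_uniq.
apply: eq_card => i; rewrite inE; apply/idP/idP.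
- move=> /mapP [ab Hab ->]; apply/existsP; apply/(supp_word _ Hred).
  by exists ab => //; rewrite -mem_undup.
- move=> /existsP H; have := (supp_word (val i) Hred).2 H.
  move=> [ab Hab E]; apply/mapP; exists ab; rewrite ?mem_undup //.
  exact: val_inj.
Qed.

End Perm.

Section Dyck.
Variable n : nat.
Variable c : seq nat.
Hypothesis Hc : linNakayama n c.

Local Notation ee := (ee c).
Local Notation h := (dyck_height n c).

Definition VV (y i : nat) : bool := (2 * i <= y) && (y < i + ee i).

Lemma hchar y m : y <= 2 * n -> m <= n -> VV y m -> (forall j, j < m -> ~~ VV y j) ->
  h (2 * n - y) = y - 2 * m.
Proof.
move=> Hy Hm Vm Hmin.
have E : 2 * n - (2 * n - y) = y by lia.
rewrite /dyck_height E; apply/eqP; rewrite eqn_leq; apply/andP; split.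
- apply/bigmax_leqP => i _; apply/bigmax_leqP => k _.
  case: eqP => // Hk.
  have Vi : VV y i by rewrite /VV /ee; have := ltn_ord k; lia.
  have : m <= i by rewrite leqNgt; apply/negP => H; move: (Hmin _ H); rewrite Vi.
  lia.
- have Hm' : m < n.+1 by [].
  have Hk : y - 2 * m < nth 0 c m by move: Vm; rewrite /VV /ee; lia.
  have L1 := @leq_bigmax _ (fun i : 'I_n.+1 => \max_(k < nth 0 c i) (if 2 * i + k == y then nat_of_ord k else 0)) (Ordinal Hm').
  apply: (leq_trans _ L1) => /=.
  have L2 := @leq_bigmax _ (fun k : 'I_(nth 0 c m) => (if 2 * m + k == y then nat_of_ord k else 0)) (Ordinal Hk).
  apply: (leq_trans _ L2) => /=.
  have E2 : 2 * m + (y - 2 * m) == y by move: Vm; rewrite /VV; lia.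
  by rewrite E2.
Qed.

Lemma VV_ex y : y <= 2 * n -> exists m, [/\ m <= n, VV y m & forall j, j < m -> ~~ VV y j].
Proof.
move=> Hy.
have Hw : VV y (y %/ 2).
  rewrite /VV /ee; case: (ltnP (y %/ 2) n) => H.
    have := Hc2 Hc H; lia.
  have E : y %/ 2 = n by lia.
  by rewrite E Hcn //; lia.
case: (ex_minnP (ex_intro (fun m => VV y m) _ Hw)) => m Vm Hmin.
exists m; split => //.
- by have := Hmin _ Hw; lia.
- by move=> j Hj; apply/negP => Vj; have := Hmin _ Vj; lia.
Qed.

Lemma E2mono i j : i <= j -> i + ee i <= j + ee j.
Proof. by move=> H; have := ee_mono Hc H; lia. Qed.

Lemma E2smono i j : i < j -> i + ee i < j + ee j.
Proof. by move=> H; have := ee_mono Hc (ltnW H); lia. Qed.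

Lemma hval y : y <= 2 * n -> exists m, [/\ m <= n, VV y m, forall j, j < m -> ~~ VV y j &
  h (2 * n - y) = y - 2 * m].
Proof.
move=> Hy; case: (VV_ex Hy) => m [H1 H2 H3]; exists m; split => //.
exact: hchar.
Qed.

Lemma valley_jump X : valley h n X ->
  exists a, [/\ a < n, ee a < ee a.+1, X = 2 * n - (a + ee a) & h X = nth 0 c a - 2].
Proof.
case=> /andP [X0 X1] HL HR.
set y := 2 * n - X.
have EX : X = 2 * n - y by rewrite /y; lia.
have EL : X.-1 = 2 * n - y.+1 by rewrite /y; lia.
have ER : X.+1 = 2 * n - y.-1 by rewrite /y; lia.
case: (hval (_ : y <= 2 * n)) => [|m [Hm Vm Mm hm]]; first by rewrite /y; lia.
case: (hval (_ : y.+1 <= 2 * n)) => [|mL [HmL VmL MmL hmL]]; first by rewrite /y; lia.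
case: (hval (_ : y.-1 <= 2 * n)) => [|mR [HmR VmR MmR hmR]]; first by rewrite /y; lia.
rewrite EL hmL EX hm in HL; rewrite ER hmR EX hm in HR.
move: Vm VmL VmR; rewrite /VV => Vm VmL VmR.
have EmR : m = mR.+1 by lia.
have EmL : mL = m by lia.
have NotV : ~~ VV y mR by apply: Mm; lia.
move: NotV; rewrite /VV negb_and -leqNgt -ltnNge => NotV.
have Ey : y = mR + ee mR by move: NotV VmR; lia.
exists mR; split.
- lia.
- move: VmL; rewrite EmL EmR Ey; lia.
- by rewrite EX Ey.
- have Hlt : mR < n by lia.
  rewrite EX hm Ey EmR; have := ee_ge Hc Hlt; rewrite /ee; lia.
Qed.

Lemma jump_valley a : a < n -> ee a < ee a.+1 ->
  valley h n (2 * n - (a + ee a)) /\ h (2 * n - (a + ee a)) = nth 0 c a - 2.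
Proof.
move=> Ha J.
have Hge := ee_ge Hc Ha.
have Hle := ee_le Hc (Ha : a.+1 <= n).
set y := a + ee a.
have Hy : y <= 2 * n by rewrite /y; lia.
have h0 : h (2 * n - y) = y - 2 * a.+1.
  apply: hchar; [lia | lia | rewrite /VV /y; lia | ].
  move=> j Hj; rewrite /VV negb_and; apply/orP; right; rewrite -leqNgt.
  have Hja : j <= a by lia.
  by have := E2mono Hja; rewrite /y; lia.
have hR : h (2 * n - y.+1) = y.+1 - 2 * a.+1.
  apply: hchar; [rewrite /y; lia | lia | rewrite /VV /y; lia | ].
  move=> j Hj; rewrite /VV negb_and; apply/orP; right; rewrite -leqNgt.
  have Hja : j <= a by lia.
  by have := E2mono Hja; rewrite /y; lia.
have hL : h (2 * n - y.-1) = y.-1 - 2 * a.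
  apply: hchar; [rewrite /y; lia | lia | rewrite /VV /y; lia | ].
  move=> j Hj; rewrite /VV negb_and; apply/orP; right; rewrite -leqNgt.
  have := E2smono Hj; rewrite /y; lia.
split; last by rewrite h0 /y /ee; lia.
split.
- rewrite /y; apply/andP; split; lia.
- have -> : (2 * n - y).-1 = 2 * n - y.+1 by rewrite /y; lia.
  by rewrite hR h0 /y; lia.
- have -> : (2 * n - y).+1 = 2 * n - y.-1 by rewrite /y; lia.
  by rewrite hL h0 /y; lia.
Qed.

Lemma supp_char (pi : 'S_n) (i : 'I_n) : BJS h pi ->
  (exists x : 'I_n, (x <= i) && (i < pi x)) <-> Bb n c (n.-1 - i).
Proof.
case=> B1 B2; split.
- move=> [x /andP [Hx Hpx]].
  case: (classic (valleyPos h n x)) => [[X [HX Ex]]|NV].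
    case: (valley_jump HX) => a [Ha J EX hX].
    have Hpi := B1 X HX x Ex.
    have Hle := ee_le Hc (Ha : a.+1 <= n).
    have Hge := ee_ge Hc Ha.
    move: Ex Hpi; rewrite hX EX /ee => Ex Hpi.
    apply/existsP; exists (Ordinal Ha); rewrite /= J /=.
    move: Ex Hpi Hle Hge; rewrite /ee; lia.
  exfalso.
  case: (pigeon1 (ex_intro _ x (introT andP (conj Hx Hpx)))) => y /andP [Hy Hpy].
  case: (classic (valleyPos h n y)) => [[X [HX Ey]]|NVy].
    have Hpi := B1 X HX y Ey.
    move: Hpi Ey Hy Hpy; move: (h X) (nat_of_ord (pi y)) (nat_of_ord y) (nat_of_ord i) => hh P Y I; clear; lia.
  have Hxy : x < y by lia.
  have := B2 x y Hxy NV NVy; lia.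
- move=> /existsP [a /andP [J /andP [L R]]].
  have Ha := ltn_ord a.
  case: (jump_valley Ha J) => HV hX.
  have Hle := ee_le Hc (Ha : a.+1 <= n).
  have Hge := ee_ge Hc Ha.
  have Hp : n - ee a < n by move: Hge; rewrite /ee; lia.
  have Eee : ee a = a + nth 0 c a by [].
  have Ex : (Ordinal Hp : nat).+1 = ((2 * n - (a + ee a)) - h (2 * n - (a + ee a)))./2.
    by rewrite hX /=; lia.
  have Hpi := B1 _ HV (Ordinal Hp) Ex.
  rewrite hX in Hpi.
  exists (Ordinal Hp); apply/andP; split => /=; have := ltn_ord i; lia.
Qed.


End Dyck.
Theorem mainTheorem2 (K : fieldType) (n : nat) (pi : 'S_n) (c : seq nat) :
  1 <= n ->
  avoids321 pi ->
  linNakayama n c ->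
  BJS (dyck_height n c) pi ->
  forall w : seq ('I_n * 'I_n), reduced_word pi w ->
  Ext1_iso_Kpow (K := K) c (actJ K c) (actJ K c) (support_size_of w).
Proof.
move=> Hn _ Hc HB w Hw.
set S := [set i : 'I_n | [exists x : 'I_n, (x <= i) && (i < pi x)]].
have Hs : support_size_of w = #|S| by rewrite /support_size_of (supp_count Hw).
rewrite Hs.
apply: (@ext_main K n c Hc _ (fun k : 'I_#|S| => n.-1 - enum_val k)).
- move=> k1 k2 /= E; apply: enum_val_inj; apply: val_inj.
  by have := ltn_ord (enum_val k1); have := ltn_ord (enum_val k2); move: E; rewrite !valE; lia.
- move=> k; have := enum_valP k; rewrite inE => /existsP H.
  exact: (supp_char Hc (enum_val k) HB).1 H.
- move=> b Hb.
  have hb : b < n.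
    case/existsP: (Hb) => a /andP [J /andP [L R]].
    by have := ee_le Hc (ltn_ord a : a.+1 <= n); lia.
  have hi : n.-1 - b < n by lia.
  have Eb : n.-1 - (Ordinal hi : nat) = b by rewrite /=; lia.
  have Hi : Ordinal hi \in S.
    rewrite inE; apply/existsP; apply/(supp_char Hc (Ordinal hi) HB).2.
    by rewrite Eb.
  by exists (enum_rank_in Hi (Ordinal hi)); rewrite enum_rankK_in.
Qed.
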